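(* Consider the two-layer multi-item order fulfillment problem described in the context with a single FDC ($K=1$), fixed costs $f_0,f_1>0$, and time-invariant variable costs $c_{k,t}^i\equiv c_k^i$. Let $w=f_0/f_1$. Let \textsc{Randomized-Cost-Comparison V-Priority} be the following randomized policy. In each period $t$, for each item $i$, set $\hat m_{1,t}^i=\min\{S_t^i,I_{1,t-1}^i\}$ if $c_1^i<c_0^i$ and $\hat m_{1,t}^i=0$ otherwise, and $\hat m_{0,t}^i=S_t^i-\hat m_{1,t}^i$. Let $x_t=\sum_{i=1}^n(c_0^i-c_1^i)\hat m_{1,t}^i$ and draw, independently of everything else, $\theta_t\sim\mathrm{Bernoulli}(p(x_t))$, where \[p(x)=\begin{cases}1,& x\le f_1,\\ \dfrac{f_1^2-(f_0+x)f_0}{f_1^2+(f_0+x)(x-f_1)},& f_1<x\le\max\{f_1,\ f_1^2/f_0-f_0\},\\ 0,& x>\max\{f_1,\ f_1^2/f_0-f_0\}.\end{cases}\] If $\theta_t=1$, fulfill the whole order from the RDC ($m_{0,t}^i=S_t^i$, $m_{1,t}^i=0$); otherwise set $m_{k,t}^i=\hat m_{k,t}^i$. Then \[\mathfrak R_{\mathrm{inv}}(\textsc{Randomized-Cost-Comparison V-Priority})\le\begin{cases}1+\dfrac{1}{1-w+2\sqrt{1-w}},& w<\frac{\sqrt5-1}{2},\\ 1+w,& w\ge\frac{\sqrt5-1}{2}.\end{cases}\]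
   Context: Problem with one FDC (index $1$) and one RDC (index $0$, unlimited inventory). The FDC initially holds $I_{1,0}^i\ge0$ units of item $i\in[n]$, never replenished. In periods $t=1,\dots,T$ an order $\boldsymbol S_t=(S_t^i)_i$ of nonnegative integers arrives; the policy must immediately and irrevocably choose $m_{0,t}^i,m_{1,t}^i\ge0$ with $m_{0,t}^i+m_{1,t}^i=S_t^i$ and $m_{1,t}^i\le I_{1,t-1}^i$, where $I_{1,t}^i=I_{1,0}^i-\sum_{\tau\le t}m_{1,\tau}^i$. Period cost $\sum_{k=0,1}[f_k\mathbb{I}(\sum_im_{k,t}^i>0)+\sum_ic_k^im_{k,t}^i]$; total cost is the sum. Online policies use only fixed costs, initial inventories, the (time-invariant) variable costs and orders up to the current period. $\mathrm{ALG}(I)$ is the expected total cost of the policy on instance $I$ and $\mathrm{OPT}(I)$ the offline optimal total cost. $\mathfrak R_{\mathrm{inv}}(\mathrm{ALG})$ is the supremum of $\mathrm{ALG}(I)/\mathrm{OPT}(I)$ over all $n,T$, initial inventories, nonnegative time-invariant variable costs $c_k^i$ and order sequences. *)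

(* Defs.v *)
From mathcomp Require Import all_boot all_order all_algebra.
From mathcomp Require Import reals.
Set Implicit Arguments. Unset Strict Implicit. Unset Printing Implicit Defensive.
Import Order.TTheory GRing.Theory Num.Theory.
Local Open Scope ring_scope.

(* Periods are indexed 0..T-1 (period t of the paper is index t-1).
   An order sequence is S : nat -> 'I_n -> nat (S t i = S_{t+1}^i).
   Index 0 = RDC, index 1 = the single FDC. *)

Definition period_cost (R : realType) (n : nat) (f0 f1 : R) (c0 c1 : 'I_n -> R)
    (m0 m1 : 'I_n -> nat) : R :=
  (if (0 < \sum_(i < n) m0 i)%N then f0 else 0) + \sum_(i < n) c0 i * (m0 i)%:R
  + ((if (0 < \sum_(i < n) m1 i)%N then f1 else 0) + \sum_(i < n) c1 i * (m1 i)%:R).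

(* Offline plans: m1 t i units of item i shipped from the FDC in period t,
   the rest S t i - m1 t i from the RDC. Feasibility: m_{1,t}^i <= S_t^i and
   m_{1,t}^i <= I_{1,t-1}^i = I_{1,0}^i - sum_{s<t} m_{1,s}^i. *)
Definition feasible_plan (n T : nat) (I0 : 'I_n -> nat) (S : nat -> 'I_n -> nat)
    (m1 : nat -> 'I_n -> nat) : Prop :=
  forall t i, (t < T)%N ->
    (m1 t i <= S t i)%N /\ (m1 t i + \sum_(s < t) m1 s i <= I0 i)%N.

Definition plan_cost (R : realType) (n T : nat) (f0 f1 : R) (c0 c1 : 'I_n -> R)
    (S : nat -> 'I_n -> nat) (m1 : nat -> 'I_n -> nat) : R :=
  \sum_(t < T) period_cost f0 f1 c0 c1 (fun i => (S t i - m1 t i)%N) (m1 t).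

Definition p_rdc (R : realType) (f0 f1 x : R) : R :=
  if x <= f1 then 1
  else if x <= Num.max f1 (f1 ^+ 2 / f0 - f0) then
    (f1 ^+ 2 - (f0 + x) * f0) / (f1 ^+ 2 + (f0 + x) * (x - f1))
  else 0.

(* Expected cost of Randomized-Cost-Comparison V-Priority over periods
   t, t+1, ..., t+k-1, when the FDC inventory at the start of period t is inv.
   theta_t ~ Bernoulli(p(x_t)) is drawn independently of everything else, so the
   expectation is computed by conditioning on theta_t (total expectation). *)
Fixpoint rcc_exp_cost (R : realType) (n : nat) (f0 f1 : R) (c0 c1 : 'I_n -> R)
    (S : nat -> 'I_n -> nat) (k t : nat) (inv : 'I_n -> nat) : R :=
  match k with
  | 0 => 0
  | k'.+1 =>
    let mh1 := fun i => if c1 i < c0 i then minn (S t i) (inv i) else 0%N in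
    let mh0 := fun i => (S t i - mh1 i)%N in
    let x := \sum_(i < n) (c0 i - c1 i) * (mh1 i)%:R in
    let q := p_rdc f0 f1 x in
    q * (period_cost f0 f1 c0 c1 (S t) (fun _ => 0%N)
         + rcc_exp_cost f0 f1 c0 c1 S k' t.+1 inv)
    + (1 - q) * (period_cost f0 f1 c0 c1 mh0 mh1
         + rcc_exp_cost f0 f1 c0 c1 S k' t.+1 (fun i => (inv i - mh1 i)%N))
  end.

Definition rcc_alg (R : realType) (n T : nat) (f0 f1 : R) (c0 c1 : 'I_n -> R)
    (I0 : 'I_n -> nat) (S : nat -> 'I_n -> nat) : R :=
  rcc_exp_cost f0 f1 c0 c1 S T 0 I0.

Definition rcc_bound (R : realType) (w : R) : R :=
  if w < (Num.sqrt 5 - 1) / 2 then 1 + 1 / (1 - w + 2 * Num.sqrt (1 - w))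
  else 1 + w.

(* Main.v *)
Require Import Defs.
From mathcomp Require Import all_boot all_order all_algebra.
From mathcomp Require Import reals.
From mathcomp Require Import ring lra zify.
Import Order.TTheory GRing.Theory Num.Theory.
Local Open Scope ring_scope.

Section R1.
Variable R : realType.

Lemma sqrt5_facts : 0 <= Num.sqrt (5:R) /\ Num.sqrt (5:R) ^+ 2 = 5.
Proof. split; [exact: sqrtr_ge0 | by rewrite sqr_sqrtr]. Qed.

Lemma bound_ge (f0 f1 : R) : 0 < f0 -> 0 < f1 ->
  1 + f0 / f1 <= rcc_bound (f0 / f1).
Proof.
move=> h0 h1; rewrite /rcc_bound; case: ifP => h; last by lra.
set w := f0 / f1.
have w0 : 0 < w by apply: divr_gt0.
have [r0 r5] := sqrt5_facts.
have r53 : Num.sqrt (5:R) < 3.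
  rewrite ltNge; apply/negP => h3; clear -r0 r5 h3; nra.
have h' : w < (Num.sqrt (5:R) - 1) / 2 by exact: h.
have w1 : w < 1 by lra.
set s := Num.sqrt (1 - w).
have s0 : 0 <= s by exact: sqrtr_ge0.
have s2 : s ^+ 2 = 1 - w by rewrite sqr_sqrtr; lra.
have ew : w = 1 - s ^+ 2 by lra.
have den : 0 < 1 - w + 2 * s by lra.
rewrite lerD2l ler_pdivlMr // ew.
have := sqr_ge0 (s ^+ 2 + s - 1).
nra.
Qed.

Lemma gt_f1_facts (f0 f1 x : R) : 0 < f0 -> 0 < f1 -> f1 < x ->
  let p := p_rdc f0 f1 x in let b := rcc_bound (f0 / f1) in
  [/\ 0 <= p, p <= 1, (1 - p) * f1 <= (b - 1) * (f0 + x)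
    & f0 + p * x + (1 - p) * f1 <= b * f1].
Proof.
move=> h0 h1 hx p b.
have hb := @bound_ge f0 f1 h0 h1. rewrite -/b in hb.
set w := f0 / f1 in hb.
have hw : w * f1 = f0 by rewrite /w divfK // gt_eqF.
set k := f1 ^+ 2 / f0.
have hk : k * f0 = f1 ^+ 2 by rewrite /k divfK // gt_eqF.
rewrite /p /p_rdc.
have -> : (x <= f1) = false by apply/negbTE; rewrite -ltNge.
case: ifP => hm; last first.
  have hxk : k - f0 < x.
    by move/negbT: hm; rewrite le_max negb_or => /andP[_]; rewrite -ltNge.
  have hf : f1 ^+ 2 < f0 * (x + f0) by nra.
  split; [lra|lra| |nra].
  have : f1 * f1 < w * (x + f0) * f1 by nra.
  rewrite ltr_pM2r // => ?; nra.
have hxk : x <= k - f0.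
  by move: hm; rewrite le_max => /orP[]; [lra|].
have hN : f0 * (x + f0) <= f1 ^+ 2 by nra.
have [r0 r5] := sqrt5_facts.
have w1 : w ^+ 2 + w < 1.
  have : (w ^+ 2 + w) * (f1 * f1) < f1 * f1 by nra.
  by rewrite -[X in _ < X]mul1r ltr_pM2r //; nra.
have hlt : w < (Num.sqrt 5 - 1) / 2.
  rewrite ltr_pdivlMr //; nra.
rewrite /b /rcc_bound hlt.
have w1' : w < 1 by nra.
set s := Num.sqrt (1 - w).
have s0 : 0 <= s by exact: sqrtr_ge0.
have s2 : s ^+ 2 = 1 - w by rewrite sqr_sqrtr; lra.
have ef0 : f0 = f1 * (1 - s ^+ 2) by rewrite s2; nra.
have den0 : 0 < 1 - w + 2 * s by lra.
set den := 1 - w + 2 * s in den0 *.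
set bb := 1 / den.
have hbb : bb * den = 1 by rewrite /bb mul1r mulVf // gt_eqF.
have bb0 : 0 < bb by rewrite /bb mul1r invr_gt0.
have Dn0 : 0 < f1 ^+ 2 + (f0 + x) * (x - f1) by nra.
set Dn := f1 ^+ 2 + (f0 + x) * (x - f1) in Dn0 *.
set N := f1 ^+ 2 - (f0 + x) * f0.
have N0 : 0 <= N by rewrite /N; nra.
set P := N / Dn.
have hP : P * Dn = N by rewrite /P divfK // gt_eqF.
have key : f1 * (x + f0 - f1) * den <= Dn.
  have e : Dn - f1 * (x + f0 - f1) * den = (x + f0 - f1 - f1 * s) ^+ 2.
    rewrite /Dn /den -s2 ef0; ring.
  have := sqr_ge0 (x + f0 - f1 - f1 * s); lra.
have e1 : (1 - P) * Dn = (f0 + x) * (x + f0 - f1).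
  rewrite mulrBl mul1r hP /Dn /N; ring.
have C1a : (1 - P) * f1 * den * Dn <= (f0 + x) * Dn.
  have -> : (1 - P) * f1 * den * Dn = ((1 - P) * Dn) * (f1 * den) by ring.
  rewrite e1 -mulrA; apply: ler_wpM2l; first lra.
  by have -> : (x + f0 - f1) * (f1 * den) = f1 * (x + f0 - f1) * den by ring.
have C1b : (1 - P) * f1 * den <= f0 + x by rewrite -(ler_pM2r Dn0).
have C1 : (1 - P) * f1 <= bb * (f0 + x).
  have -> : (1 - P) * f1 = (1 - P) * f1 * den * bb by rewrite -mulrA [den * bb]mulrC hbb mulr1.
  by rewrite mulrC ler_wpM2l //; lra.
have eI : (f0 + P * (x - f1)) * (f0 + x) = (1 - P) * f1 ^+ 2.
  have : (f0 + P * (x - f1)) * (f0 + x) - (1 - P) * f1 ^+ 2 = f0 * (f0 + x) - f1 ^+ 2 + P * Dn.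
    by rewrite /Dn; ring.
  rewrite hP /N => h2; apply/eqP; rewrite -subr_eq0; apply/eqP; rewrite h2; ring.
have C3a : (f0 + P * (x - f1)) * (f0 + x) <= (bb * f1) * (f0 + x).
  rewrite eI expr2 mulrA.
  have -> : bb * f1 * (f0 + x) = (bb * (f0 + x)) * f1 by ring.
  by rewrite ler_wpM2r //; lra.
have C3 : f0 + P * (x - f1) <= bb * f1 by rewrite -(ler_pM2r (_ : 0 < f0 + x)) //; lra.
have P0 : 0 <= P by rewrite /P divr_ge0 //; lra.
have P1 : P <= 1 by rewrite /P ler_pdivrMr // mul1r /N /Dn; nra.
split => //.
  by have -> : 1 + bb - 1 = bb by ring.
have -> : f0 + P * x + (1 - P) * f1 = f1 + (f0 + P * (x - f1)) by ring.
have -> : (1 + bb) * f1 = f1 + bb * f1 by ring.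
by rewrite lerD2l.
Qed.

Lemma core (f0 f1 x D M F1 FA FO : R) : 0 < f0 -> 0 < f1 -> 0 <= x -> 0 <= D ->
  0 <= M -> M <= x -> 0 <= F1 -> F1 <= f0 -> 0 <= FA -> FA <= f0 + f1 ->
  0 <= FO -> (0 < x -> F1 = f0) ->
  (f1 <= FO \/ [/\ M = 0, x <= D & F1 <= FO]) ->
  p_rdc f0 f1 x * (F1 + D + M) + (1 - p_rdc f0 f1 x) * (FA + D)
    <= rcc_bound (f0 / f1) * (FO + D).
Proof.
move=> h0 h1 hx0 hD hM0 hMx hF10 hF1 hFA0 hFA hFO hF1x hor.
have hb := @bound_ge f0 f1 h0 h1.
set b := rcc_bound (f0 / f1) in hb *.
set w := f0 / f1 in hb.
have hw : w * f1 = f0 by rewrite /w divfK // gt_eqF.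
have bf1 : f1 + f0 <= b * f1 by rewrite -hw; nra.
have w0 : 0 < w by apply: divr_gt0.
have b1 : 1 <= b by lra.
have bD : D <= b * D by nra.
case: (lerP x f1) => hx.
  rewrite /p_rdc hx subrr mul0r addr0 mul1r.
  case: hor => [hf|[-> _ hF]].
    have : b * f1 <= b * FO by apply: ler_wpM2l; lra.
    nra.
  have : FO + D <= b * (FO + D) by nra.
  lra.
have [p0 p1 C1 C3] := @gt_f1_facts f0 f1 x h0 h1 hx.
rewrite -/b in C1 C3.
set p := p_rdc f0 f1 x in p0 p1 C1 C3 *.
have e1 : p * F1 <= p * f0 by apply: ler_wpM2l.
have e2 : (1 - p) * FA <= (1 - p) * (f0 + f1) by apply: ler_wpM2l; lra.
have e3 : p * M <= p * x by apply: ler_wpM2l.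
case: hor => [hf|[hM hxD hF]].
  have : b * f1 <= b * FO by apply: ler_wpM2l; lra.
  nra.
have hF1' : F1 = f0 by apply: hF1x; lra.
have e4 : (b - 1) * (f0 + x) <= (b - 1) * (f0 + D) by apply: ler_wpM2l; lra.
have : b * f0 <= b * FO by apply: ler_wpM2l; lra.
rewrite hM in e3 *.
nra.
Qed.
End R1.

Section Step.
Variable R : realType.
Variables (f0 f1 : R) (hf0 : 0 < f0) (hf1 : 0 < f1).
Variables (n : nat) (c0 c1 : 'I_n -> R).
Hypotheses (hc0 : forall i, 0 <= c0 i) (hc1 : forall i, 0 <= c1 i).

Definition gd i : R := if c1 i < c0 i then c0 i - c1 i else 0.
Definition phi (a o : 'I_n -> nat) : R := \sum_(i < n) gd i * (o i - a i)%:R.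

Lemma gd_ge0 i : 0 <= gd i.
Proof. rewrite /gd; case: ifP => h //; lra. Qed.

Lemma gd_mulle i (u v : nat) : (u <= v)%N -> gd i * u%:R <= gd i * v%:R.
Proof. by move=> h; apply: ler_wpM2l; [exact: gd_ge0 | rewrite ler_nat]. Qed.

Lemma p_rdc01 x : 0 <= p_rdc f0 f1 x <= 1.
Proof.
case: (lerP x f1) => hx.
  by rewrite /p_rdc hx ler01 lexx.
by have [-> -> _ _] := @gt_f1_facts R f0 f1 x hf0 hf1 hx.
Qed.

Lemma step (St a o z y : 'I_n -> nat) : (forall i, (z i <= St i)%N) ->
  (forall i, (z i <= o i)%N) ->
  (forall i, y i = if c1 i < c0 i then minn (St i) (a i) else 0%N) ->
  p_rdc f0 f1 (\sum_(i < n) (c0 i - c1 i) * (y i)%:R) *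
    (period_cost f0 f1 c0 c1 St (fun _ => 0%N) + phi a (fun i => (o i - z i)%N))
  + (1 - p_rdc f0 f1 (\sum_(i < n) (c0 i - c1 i) * (y i)%:R)) *
    (period_cost f0 f1 c0 c1 (fun i => (St i - y i)%N) y
               + phi (fun i => (a i - y i)%N) (fun i => (o i - z i)%N))
  <= rcc_bound (f0 / f1) * period_cost f0 f1 c0 c1 (fun i => (St i - z i)%N) z
     + phi a o.
Proof.
move=> hzS hzo hy.
have hf0l := hf0; have hf1l := hf1.
set x := \sum_(i < n) (c0 i - c1 i) * (y i)%:R.
set q := p_rdc f0 f1 x.
set B := \sum_(i < n) c0 i * (St i)%:R.
set Z := \sum_(i < n) gd i * (z i)%:R.
set M := \sum_(i < n) gd i * (z i - minn (z i) (o i - a i))%:R.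
set F1 := if (0 < \sum_(i < n) St i)%N then f0 else 0.
set FA := (if (0 < \sum_(i < n) (St i - y i)%N)%N then f0 else 0)
          + (if (0 < \sum_(i < n) y i)%N then f1 else 0).
set FO := (if (0 < \sum_(i < n) (St i - z i))%N then f0 else 0)
          + (if (0 < \sum_(i < n) z i)%N then f1 else 0).
have a1 : period_cost f0 f1 c0 c1 St (fun _ => 0%N) + phi a (fun i => (o i - z i)%N)
          <= F1 + (B - Z) + M + phi a o.
  rewrite /period_cost /=.
  have -> : \sum_(i < n) (0%N) = 0%N by rewrite big1.
  have -> : \sum_(i < n) c1 i * (0%N)%:R = 0 by rewrite big1 // => i _; rewrite mulr0.
  have H : B + phi a (fun i => (o i - z i)%N) <= (B - Z) + M + phi a o.
    rewrite /phi /B /Z /M -sumrB -!big_split /=; apply: ler_sum => i _.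
    have hn : ((o i - z i - a i) + z i <= (z i - minn (z i) (o i - a i)) + (o i - a i))%N.
      by lia.
    have := @gd_mulle i _ _ hn; rewrite !natrD !mulrDr => hh.
    set A1 := gd i * (o i - z i - a i)%:R in hh *. set A2 := gd i * (z i)%:R in hh *. set A3 := gd i * (z i - minn (z i) (o i - a i))%:R in hh *. set A4 := gd i * (o i - a i)%:R in hh *. set A5 := c0 i * (St i)%:R. lra.
  rewrite ltnn -/B -/F1; lra.
have a0 : period_cost f0 f1 c0 c1 (fun i => (St i - y i)%N) y
          + phi (fun i => (a i - y i)%N) (fun i => (o i - z i)%N)
          <= FA + (B - Z) + phi a o.
  rewrite /period_cost /=.
  have H : \sum_(i < n) c0 i * (St i - y i)%:R + \sum_(i < n) c1 i * (y i)%:R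
           + phi (fun i => (a i - y i)%N) (fun i => (o i - z i)%N)
           <= (B - Z) + phi a o.
    rewrite /phi /B /Z -sumrB -!big_split /=; apply: ler_sum => i _.
    rewrite hy /gd; case: ifP => hg.
      have hyS : (minn (St i) (a i) <= St i)%N by apply: geq_minl.
      have hn : ((o i - z i - (a i - minn (St i) (a i))) + z i
                 <= minn (St i) (a i) + (o i - a i))%N.
        by have := hzS i; have := hzo i; lia.
      have : (c0 i - c1 i) * ((o i - z i - (a i - minn (St i) (a i))) + z i)%:R
             <= (c0 i - c1 i) * (minn (St i) (a i) + (o i - a i))%:R.
        by apply: ler_wpM2l; [lra | rewrite ler_nat].
      rewrite !natrD !mulrDr (natrB _ hyS) => hh.
      move: hh; set N1 := (o i - z i - (a i - minn (St i) (a i)))%:R.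
      set N2 := (z i)%:R; set N3 := (minn (St i) (a i))%:R; set N4 := (o i - a i)%:R.
      set N5 := (St i)%:R; move=> hh; lra.
    rewrite subn0 !mulr0 !mul0r; lra.
  rewrite /FA; set I1 := (if _ then f0 else 0); set I2 := (if _ then f1 else 0); lra.
have ao : FO + (B - Z) <= period_cost f0 f1 c0 c1 (fun i => (St i - z i)%N) z.
  rewrite /period_cost /=.
  have H : B - Z <= \sum_(i < n) c0 i * (St i - z i)%:R + \sum_(i < n) c1 i * (z i)%:R.
    rewrite /B /Z -sumrB -big_split /=; apply: ler_sum => i _.
    rewrite natrB // /gd; case: ifP => hg; first lra.
    have hc : c0 i <= c1 i by rewrite leNgt hg.
    have : c0 i * (z i)%:R <= c1 i * (z i)%:R by apply: ler_wpM2r.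
    rewrite mul0r; lra.
  rewrite /FO; set I1 := (if _ then f0 else 0); set I2 := (if _ then f1 else 0); lra.
have hq := p_rdc01 x; rewrite -/q in hq; case/andP: hq => q0 q1.
have x0 : 0 <= x.
  apply: sumr_ge0 => i _; rewrite hy; case: ifP => h; last by rewrite mulr0.
  by apply: mulr_ge0; [lra | exact: ler0n].
have D0 : 0 <= B - Z.
  rewrite /B /Z -sumrB; apply: sumr_ge0 => i _.
  have hz : (z i)%:R <= (St i)%:R :> R by rewrite ler_nat.
  have hz0 : 0 <= (z i)%:R :> R by exact: ler0n.
  have := hc0 i; have := hc1 i.
  rewrite /gd; case: ifP => hg; nra.
have M0 : 0 <= M by apply: sumr_ge0 => i _; apply: mulr_ge0; [exact: gd_ge0 | exact: ler0n].
have Mx : M <= x.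
  apply: ler_sum => i _; rewrite hy /gd; case: ifP => hg; last by rewrite !mul0r mulr0.
  apply: ler_wpM2l; first lra.
  by rewrite ler_nat; have := hzS i; have := hzo i; lia.
have F10 : 0 <= F1.
  rewrite /F1; case: ifP => _; lra.
have F1f : F1 <= f0 by rewrite /F1; case: ifP => _; lra.
have FA0 : 0 <= FA by rewrite /FA; case: ifP => _; case: ifP => _; lra.
have FAf : FA <= f0 + f1 by rewrite /FA; case: ifP => _; case: ifP => _; lra.
have FO0 : 0 <= FO by rewrite /FO; case: ifP => _; case: ifP => _; lra.
have hF1x : 0 < x -> F1 = f0.
  rewrite /F1; case: ifP => // hS hx.
  move/negbT: hS; rewrite -eqn0Ngt sum_nat_eq0 => /forallP hS0.
  suff : x = 0 by lra.
  rewrite /x big1 // => i _; rewrite hy (eqP (hS0 i)) min0n; case: ifP => _; exact: mulr0.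
have hor : f1 <= FO \/ [/\ M = 0, x <= B - Z & F1 <= FO].
  case: (posnP (\sum_(i < n) z i)) => hz; last first.
    by left; rewrite /FO hz; case: ifP => _; lra.
  move/eqP: (hz); rewrite sum_nat_eq0 => /forallP hz0.
  have hzi : forall i, z i = 0%N by move=> i; exact: (eqP (hz0 i)).
  have Z0 : Z = 0 by rewrite /Z big1 // => i _; rewrite hzi mulr0.
  right; split.
  - by rewrite /M big1 // => i _; rewrite hzi sub0n mulr0.
  - rewrite Z0 subr0; apply: ler_sum => i _; rewrite hy.
    case: ifP => hg; last by rewrite mulr0; apply: mulr_ge0; [exact: hc0 | exact: ler0n].
    have h1 : (minn (St i) (a i))%:R <= (St i)%:R :> R by rewrite ler_nat geq_minl.
    have h2 : 0 <= (minn (St i) (a i))%:R :> R by exact: ler0n.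
    have := hc0 i; have := hc1 i; nra.
  - rewrite /FO hz /F1.
    have -> : \sum_(i < n) (St i - z i)%N = \sum_(i < n) St i.
      by apply: eq_bigr => i _; rewrite hzi subn0.
    by rewrite ltnn /= addr0.
have C := @core R f0 f1 x (B - Z) M F1 FA FO hf0 hf1 x0 D0 M0 Mx F10 F1f FA0 FAf FO0 hF1x hor.
rewrite -/q in C.
have hb := @bound_ge R f0 f1 hf0 hf1.
have w0 : 0 < f0 / f1 by apply: divr_gt0.
have e1 : q * (period_cost f0 f1 c0 c1 St (fun=> 0%N) + phi a (fun i => (o i - z i)%N))
          <= q * (F1 + (B - Z) + M + phi a o) by apply: ler_wpM2l.
have e2 : (1 - q) * (period_cost f0 f1 c0 c1 (fun i => (St i - y i)%N) y
               + phi (fun i => (a i - y i)%N) (fun i => (o i - z i)%N))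
          <= (1 - q) * (FA + (B - Z) + phi a o) by apply: ler_wpM2l; lra.
have e3 : rcc_bound (f0 / f1) * (FO + (B - Z))
          <= rcc_bound (f0 / f1) * period_cost f0 f1 c0 c1 (fun i => (St i - z i)%N) z.
  by apply: ler_wpM2l; lra.
have ex : q * (F1 + (B - Z) + M + phi a o) + (1 - q) * (FA + (B - Z) + phi a o)
          = q * (F1 + (B - Z) + M) + (1 - q) * (FA + (B - Z)) + phi a o by ring.
lra.
Qed.

Definition mh (St a : 'I_n -> nat) (i : 'I_n) : nat :=
  if c1 i < c0 i then minn (St i) (a i) else 0%N.

Lemma rcc_S (S : nat -> 'I_n -> nat) k t inv :
  rcc_exp_cost f0 f1 c0 c1 S k.+1 t inv =
  p_rdc f0 f1 (\sum_(i < n) (c0 i - c1 i) * (mh (S t) inv i)%:R) *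
    (period_cost f0 f1 c0 c1 (S t) (fun _ => 0%N) + rcc_exp_cost f0 f1 c0 c1 S k t.+1 inv)
  + (1 - p_rdc f0 f1 (\sum_(i < n) (c0 i - c1 i) * (mh (S t) inv i)%:R)) *
    (period_cost f0 f1 c0 c1 (fun i => (S t i - mh (S t) inv i)%N) (mh (S t) inv)
     + rcc_exp_cost f0 f1 c0 c1 S k t.+1 (fun i => (inv i - mh (S t) inv i)%N)).
Proof. by []. Qed.

Lemma phi_ge0 a o : 0 <= phi a o.
Proof. by apply: sumr_ge0 => i _; apply: mulr_ge0; [exact: gd_ge0 | exact: ler0n]. Qed.

Lemma main_ind (S m1 : nat -> 'I_n -> nat) k : forall t a o,
  (forall s i, (s < k)%N -> (m1 (t + s) i <= S (t + s) i)%N /\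
     (m1 (t + s) i + \sum_(u < s) m1 (t + u) i <= o i)%N) ->
  rcc_exp_cost f0 f1 c0 c1 S k t a
  <= rcc_bound (f0 / f1) *
     \sum_(s < k) period_cost f0 f1 c0 c1 (fun i => (S (t + s) i - m1 (t + s) i)%N) (m1 (t + s))
     + phi a o.
Proof.
have hf0l := hf0; have hf1l := hf1.
have hb := @bound_ge R f0 f1 hf0 hf1.
have w0 : 0 < f0 / f1 by apply: divr_gt0.
elim: k => [|k IH] t a o H.
  by rewrite big_ord0 mulr0 add0r /=; exact: phi_ge0.
rewrite rcc_S.
have H0 := fun i => H 0%N i (ltn0Sn k).
have hzS : forall i, (m1 t i <= S t i)%N by move=> i; have [h _] := H0 i; rewrite addn0 in h.
have hzo : forall i, (m1 t i <= o i)%N.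
  by move=> i; have [_ h] := H0 i; rewrite big_ord0 !addn0 in h.
set o' := fun i => (o i - m1 t i)%N.
have H' : forall s i, (s < k)%N -> (m1 (t.+1 + s) i <= S (t.+1 + s) i)%N /\
     (m1 (t.+1 + s) i + \sum_(u < s) m1 (t.+1 + u) i <= o' i)%N.
  move=> s i hs; have [h1 h2] := H s.+1 i hs.
  have e : \sum_(u < s.+1) m1 (t + u) i = (m1 t i + \sum_(u < s) m1 (t.+1 + u) i)%N.
    rewrite big_ord_recl; congr (_ + _)%N; first exact: (congr1 (m1^~ i) (addn0 t)).
    apply: eq_bigr => u _.
    by rewrite lift0 addSnnS.
  rewrite e -addSnnS in h2; rewrite -addSnnS in h1.
  split => //; rewrite /o'; lia.
have I1 := IH t.+1 a o' H'.
have I2 := IH t.+1 (fun i => (a i - mh (S t) a i)%N) o' H'.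
have St := @step (S t) a o (m1 t) (mh (S t) a) hzS hzo (fun i => erefl).
have es : \sum_(s < k.+1) period_cost f0 f1 c0 c1 (fun i => (S (t + s) i - m1 (t + s) i)%N) (m1 (t + s))
  = period_cost f0 f1 c0 c1 (fun i => (S t i - m1 t i)%N) (m1 t)
    + \sum_(s < k) period_cost f0 f1 c0 c1 (fun i => (S (t.+1 + s) i - m1 (t.+1 + s) i)%N) (m1 (t.+1 + s)).
  rewrite big_ord_recl; congr (_ + _).
    exact: (congr1 (fun v => period_cost f0 f1 c0 c1 (fun i => (S v i - m1 v i)%N) (m1 v)) (addn0 t)).
  apply: eq_bigr => u _.
  exact: (congr1 (fun v => period_cost f0 f1 c0 c1 (fun i => (S v i - m1 v i)%N) (m1 v)) (esym (addSnnS t u))).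
rewrite es.
set q := p_rdc f0 f1 _ in St *.
have hq := p_rdc01 (\sum_(i < n) (c0 i - c1 i) * (mh (S t) a i)%:R).
rewrite -/q in hq; case/andP: hq => q0 q1.
set O' := \sum_(s < k) _ in I1 I2 *.
set P1 := period_cost _ _ _ _ (S t) _ in St *.
set P0 := period_cost _ _ _ _ (fun i => (S t i - mh (S t) a i)%N) _ in St *.
set Pt := period_cost _ _ _ _ (fun i => (S t i - m1 t i)%N) _ in St *.
set A1 := rcc_exp_cost _ _ _ _ _ _ _ a in I1 *.
set A2 := rcc_exp_cost _ _ _ _ _ _ _ (fun i => _) in I2 *.
set Ph1 := phi a o' in I1 St.
set Ph2 := phi _ o' in I2 St.
set Ph := phi a o in St *.
set b := rcc_bound _ in St hb I1 I2 *.
have e1 : q * (P1 + A1) <= q * (P1 + (b * O' + Ph1)).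
  by apply: ler_wpM2l => //; lra.
have e2 : (1 - q) * (P0 + A2) <= (1 - q) * (P0 + (b * O' + Ph2)) by apply: ler_wpM2l; lra.
have ex : q * (P1 + (b * O' + Ph1)) + (1 - q) * (P0 + (b * O' + Ph2))
   = (q * (P1 + Ph1) + (1 - q) * (P0 + Ph2)) + b * O' by ring.
lra.
Qed.
End Step.


Theorem theorem8 (R : realType) (f0 f1 : R) (hf0 : 0 < f0) (hf1 : 0 < f1)
    (n T : nat) (I0 : 'I_n -> nat) (c0 c1 : 'I_n -> R)
    (hc0 : forall i, 0 <= c0 i) (hc1 : forall i, 0 <= c1 i)
    (S : nat -> 'I_n -> nat) (m1 : nat -> 'I_n -> nat)
    (hm1 : feasible_plan T I0 S m1) :
  rcc_alg T f0 f1 c0 c1 I0 S <= rcc_bound (f0 / f1) * plan_cost T f0 f1 c0 c1 S m1.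
Proof.
have H := @main_ind R f0 f1 hf0 hf1 n c0 c1 hc0 hc1 S m1 T 0 I0 I0
  (fun s i hs => hm1 s i hs).
have P0 : phi R n c0 c1 I0 I0 = 0.
  by rewrite /phi big1 // => i _; rewrite subnn mulr0.
rewrite P0 addr0 in H.
exact: H.
Qed.
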